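(* Let $d\ge1$, $m=2^d$, and $x\in[0,\infty)^m$ with first positive index $i^*$. Then $\mathrm{SPiRiT}_\infty(x)=S\,P\,i_\infty\big(R\, i_\infty(Tx)\big)\in\{0,1\}^d$ is the binary representation of $i^*-1$ if $i^*\ge1$, and is the zero vector if $i^*=0$.
   Context: Let $m=2^d$. Consider the complete binary tree with nodes indexed $1,\dots,2m-1$: node $1$ is the root, node $k\in[m-1]$ has left child $2k$ and right child $2k+1$; leaf number $i\in[m]$ is node $m+i-1$. For $i\in[m]$ let $\mathrm{Anc}(i)=\{\lfloor (m+i-1)/2^h\rfloor: h=0,\dots,d\}$ and $\mathrm{Lop}(i)=\{k-1: k\in \mathrm{Anc}(i),\ k\text{ odd},\ k\ge 3\}$. Tree matrix $T\in\{0,1\}^{(2m-1)\times m}$: $T(k,i)=1$ iff $k\in\mathrm{Anc}(i)$. Roots matrix $R\in\{0,1\}^{m\times(2m-1)}$: for $j\in[m-1]$, $R(j,k)=1$ iff $k\in\mathrm{Lop}(j+1)$; row $m$ of $R$ is the indicator vector of $\{1\}$. Pairwise matrix $P\in\{-1,0,1\}^{m\times m}$: $(Pu)(1)=u(1)$ and $(Pu)(k)=u(k)-u(k-1)$ for $k\ge 2$. Sketch matrix $S\in\{0,1\}^{d\times m}$: $S(h,k)$ is the $h$-th bit (coefficient of $2^{h-1}$) of $k-1$. For a real vector $y$, $i_\infty(y)$ is the $0/1$ vector with entry $1$ exactly where $y$ is nonzero. The first positive index of $x\in[0,\infty)^m$ is the smallest $i\in[m]$ with $x(i)>0$, or $0$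 if $x=0$. ''Binary representation of $n$'' means the vector whose $h$-th entry is the coefficient of $2^{h-1}$ in $n$. *)

(* Defs.v *)
From HB Require Import structures.
From mathcomp Require Import all_boot all_order all_algebra.
Set Implicit Arguments. Unset Strict Implicit. Unset Printing Implicit Defensive.
Import Order.TTheory GRing.Theory Num.Theory.

(* Convention: the paper uses 1-based indices; MathComp ordinals are 0-based.
   Entry (i, j) of each matrix below (i, j ordinals) is the paper's entry
   (i+1, j+1).  The boolean helpers Tb, Rb, Pb, Sb take 1-based indices. *)

(* T(k,i) = 1 iff k in Anc(i) = { floor((m+i-1)/2^h) : h = 0..d } *)
Definition Tb (d k i : nat) : bool :=
  [exists h : 'I_d.+1, k == (2 ^ d + i - 1) %/ 2 ^ h].

Definition Rb (d j k : nat) : bool :=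
  if j < 2 ^ d then
    [exists h : 'I_d.+1,
       let a := (2 ^ d + j.+1 - 1) %/ 2 ^ h in [&& odd a, 3 <= a & k == a - 1]]
  else k == 1.

Definition Sb (h k : nat) : bool := odd ((k - 1) %/ 2 ^ (h - 1)).

Section Mats.
Variable R : realFieldType.
Local Open Scope ring_scope.

Definition Tmx (d : nat) : 'M[R]_((2 * 2 ^ d - 1)%N, 2 ^ d) :=
  \matrix_(k, i) (Tb d k.+1 i.+1)%:R.

Definition Rmx (d : nat) : 'M[R]_(2 ^ d, (2 * 2 ^ d - 1)%N) :=
  \matrix_(j, k) (Rb d j.+1 k.+1)%:R.

Definition Pentry (k l : nat) : R :=
  if l == k then 1 else if (2 <= k)%N && (l == k - 1)%N then -1 else 0.

Definition Pmx (d : nat) : 'M[R]_(2 ^ d) :=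
  \matrix_(k, l) Pentry k.+1 l.+1.

Definition Smx (d : nat) : 'M[R]_(d, 2 ^ d) :=
  \matrix_(h, k) (Sb h.+1 k.+1)%:R.

Definition iinf (p q : nat) (y : 'M[R]_(p, q)) : 'M[R]_(p, q) :=
  map_mx (fun a => (a != 0)%:R) y.

Definition SPiRiT (d : nat) (x : 'cV[R]_(2 ^ d)) : 'cV[R]_d :=
  Smx d *m (Pmx d *m iinf (Rmx d *m iinf (Tmx d *m x))).

Definition first_pos (n : nat) (x : 'cV[R]_n) : nat :=
  let k := find (fun i : 'I_n => 0 < x i 0) (enum 'I_n) in
  if (k < n)%N then k.+1 else 0%N.

Definition binrep (d n : nat) : 'cV[R]_d :=
  \col_(h < d) (odd (n %/ 2 ^ h))%:R.

End Mats.

(* Main.v *)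
Require Import Defs.
From HB Require Import structures.
From mathcomp Require Import all_boot all_order all_algebra zify.
Import Order.TTheory GRing.Theory Num.Theory.
Set Implicit Arguments. Unset Strict Implicit.
Local Open Scope nat_scope.

Lemma div_range (d h n : nat) : h <= d -> (2 ^ d <= n < 2 ^ d.+1)%N ->
  2 ^ (d-h) <= n %/ 2 ^ h < 2 ^ (d.+1-h).
Proof.
move=> hd /andP[h1 h2]; rewrite leq_divRL ?expn_gt0 // ltn_divLR ?expn_gt0 //.
by rewrite -!expnD subnK // subnK ?h1 ?h2 // (leq_trans hd).
Qed.

Lemma C1f (d p q h h' : nat) : h <= d -> h' <= d -> (2 ^ d <= p < 2 ^ d.+1)%N -> (2 ^ d <= q < 2 ^ d.+1)%N ->
  odd (p %/ 2 ^ h') -> 3 <= p %/ 2 ^ h' -> p %/ 2 ^ h' - 1 = q %/ 2 ^ h -> q < p.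
Proof.
move=> hd hd' hp hq ho h3 he.
have /andP[a1 a2] := div_range hd' hp.
have /andP[b1 b2] := div_range hd hq.
have an : 2 ^ (d-h') != p %/ 2 ^ h'.
  apply/eqP=> E; move: ho; rewrite -E oddX orbF => /eqP E2.
  by move: h3; rewrite -E E2.
have a1' : 2 ^ (d-h') < p %/ 2 ^ h' by rewrite ltn_neqAle an a1.
have l1 : 2 ^ (d-h') < 2 ^ (d.+1-h).
  apply: (@leq_ltn_trans (q %/ 2 ^ h)) => //; rewrite -he; lia.
have l2 : 2 ^ (d-h) < 2 ^ (d.+1-h').
  apply: (@leq_ltn_trans (q %/ 2 ^ h)) => //; apply: (@leq_ltn_trans (p %/ 2 ^ h')) => //; lia.
rewrite ltn_exp2l // in l1; rewrite ltn_exp2l // in l2.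
have eh : h = h' by lia.
subst h'.
have : q %/ 2 ^ h < p %/ 2 ^ h by lia.
apply: contraTT; rewrite -!leqNgt; exact: leq_div2r.
Qed.

Lemma C1b (d p q : nat) : (2 ^ d <= q)%N -> q < p -> (p < 2 ^ d.+1)%N ->
  exists h, [/\ h < d, odd (p %/ 2 ^ h), 3 <= p %/ 2 ^ h & p %/ 2 ^ h - 1 = q %/ 2 ^ h].
Proof.
move=> hq hqp hp.
have hpd : p %/ 2 ^ d = 1.
  have := @div_range d d p (leqnn d); rewrite (leq_trans hq (ltnW hqp)) hp subnn subSn // subnn.
  move=> /(_ isT); rewrite expn0 expn1; lia.
have hqd : q %/ 2 ^ d = 1.
  have := @div_range d d q (leqnn d); rewrite hq (ltn_trans hqp hp) subnn subSn // subnn.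
  move=> /(_ isT); rewrite expn0 expn1; lia.
have exP : exists n, p %/ 2 ^ n == q %/ 2 ^ n by exists d; rewrite hpd hqd.
case: (ex_minnP exP) => h0 P0 Pmin.
have h0d : h0 <= d by apply: Pmin; rewrite hpd hqd.
case: h0 P0 Pmin h0d => [|h] P0 Pmin h0d.
  by move: P0; rewrite expn0 !divn1 => /eqP E; move: hqp; rewrite E ltnn.
exists h.
have nP : p %/ 2 ^ h != q %/ 2 ^ h.
  apply/negP=> /Pmin; by rewrite ltnn.
have le : q %/ 2 ^ h <= p %/ 2 ^ h by apply: leq_div2r; exact: ltnW.
have c1 : 1 <= p %/ 2 ^ h.+1.
  rewrite leq_divRL ?expn_gt0 // mul1n.
  apply: leq_trans (ltnW hqp); apply: leq_trans hq; by rewrite leq_exp2l.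
move: P0 c1; rewrite expnSr !divnMA => /eqP E c1.
move: nP le E c1; set u := q %/ 2 ^ h; set v := p %/ 2 ^ h => nP le E c1.
have nP' : u < v by rewrite ltn_neqAle le eq_sym nP.
have hv : v %% 2 = 1 by lia.
split.
- lia.
- by move: hv; rewrite modn2; case: (odd v).
- lia.
- lia.
Qed.
Lemma Cl (d : nat) (j i : 'I_(2 ^ d)) :
  [exists k : 'I_(2 * 2 ^ d - 1), Rb d j.+1 k.+1 && Tb d k.+1 i.+1] = (i <= j).
Proof.
have hi := ltn_ord i; have hj := ltn_ord j.
have e2 : 2 ^ d.+1 = 2 * 2 ^ d by rewrite expnS.
case: (ltnP j.+1 (2 ^ d)) => hj1.
- apply/existsP/idP.
  + case=> k /andP [hR hT]; rewrite /Rb hj1 in hR.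
    case/existsP: hR => h' /and3P [ho h3 /eqP hk].
    case/existsP: hT => h /eqP hk2.
    have ej2 : 2 ^ d + j.+2 - 1 = 2 ^ d + j.+1 by lia.
    have ei : 2 ^ d + i.+1 - 1 = 2 ^ d + i by lia.
    rewrite ej2 in ho h3 hk; rewrite ei in hk2.
    have : 2 ^ d + i < 2 ^ d + j.+1.
      apply: (@C1f d _ _ h h' (ltnSE (ltn_ord h)) (ltnSE (ltn_ord h'))) => //; try lia.
    lia.
  + move=> hij.
    have [h [hd ho h3 he]] := @C1b d (2 ^ d + j.+1) (2 ^ d + i) (leq_addr _ _) ltac:(lia) ltac:(lia).
    have hk : (2 ^ d + j.+1) %/ 2 ^ h - 2 < 2 * 2 ^ d - 1.
      have := leq_div (2 ^ d + j.+1) (2 ^ h); lia.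
    exists (Ordinal hk); apply/andP; split.
    * rewrite /Rb hj1; apply/existsP; exists (Ordinal (ltn_trans hd (ltnSn d))) => /=.
      have -> : 2 ^ d + j.+2 - 1 = 2 ^ d + j.+1 by lia.
      rewrite ho h3 /=; apply/eqP; lia.
    * apply/existsP; exists (Ordinal (ltn_trans hd (ltnSn d))) => /=.
      apply/eqP; have -> : 2 ^ d + i.+1 - 1 = 2 ^ d + i by lia.
      lia.
- have ej : j.+1 = 2 ^ d by lia.
  have -> : i <= j by lia.
  apply/existsP.
  have hk : 0 < 2 * 2 ^ d - 1 by have := expn_gt0 2 d; lia.
  exists (Ordinal hk); rewrite /Rb ej ltnn eqxx /=.
  apply/existsP; exists (Ordinal (ltnSn d)) => /=.
  have -> : 2 ^ d + i.+1 - 1 = 2 ^ d + i by lia.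
  rewrite divnDl // divnn expn_gt0 /= divn_small //.
Qed.
Local Open Scope ring_scope.
Lemma mul01 (R : realFieldType) p q (M : 'M[R]_(p,q)) (B : 'I_p -> 'I_q -> bool)
  (v : 'cV[R]_q) i :
  (forall i k, M i k = (B i k)%:R) -> (forall k, 0 <= v k 0) ->
  ((M *m v) i 0 != 0) = [exists k, B i k && (0 < v k 0)].
Proof.
move=> hM hv; rewrite mxE psumr_neq0 => [|k _]; last by rewrite hM mulr_ge0 ?ler0n.
apply/hasP/existsP => [[k _]|[k hk]].
  rewrite hM; case E: (B i k); rewrite ?mul1r ?mul0r ?ltxx //= => H; by exists k; rewrite E H.
exists k; rewrite ?mem_index_enum // hM; by case/andP: hk => hb hpos; rewrite hb mul1r hpos.
Qed.

Lemma sum_delta (R : realFieldType) n (c : 'I_n) (F : 'I_n -> R) :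
  \sum_(l < n) (l == c)%:R * F l = F c.
Proof.
rewrite (bigD1 c) //= eqxx mul1r big1 ?addr0 // => l /negPf ->; by rewrite mul0r.
Qed.

Lemma iinf_ge0 (R : realFieldType) p q (y : 'M[R]_(p,q)) i j : 0 <= iinf y i j.
Proof. by rewrite mxE ler0n. Qed.

Lemma iinf_pos (R : realFieldType) p q (y : 'M[R]_(p,q)) i j : (0 < iinf y i j) = (y i j != 0).
Proof. by rewrite mxE ltr0n lt0b. Qed.

Unset Implicit Arguments.
Theorem theorem1 (R : realFieldType) (d : nat) (x : 'cV[R]_(2 ^ d)) :
  (1 <= d)%N ->
  (forall i : 'I_(2 ^ d), 0 <= x i 0) ->
  SPiRiT x = (if (1 <= first_pos x)%N then binrep R d (first_pos x - 1)
              else 0).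
Proof.
move=> hd hx.
rewrite /SPiRiT.
set t := Tmx R d *m x.
have ht : forall k, (t k 0 != 0) = [exists i : 'I_(2 ^ d), Tb d k.+1 i.+1 && (0 < x i 0)].
  move=> k; rewrite (mul01 (B := fun k i => Tb d k.+1 i.+1)) // => i' k'; by rewrite mxE.
set u := Rmx R d *m iinf t.
have hu : forall j, (u j 0 != 0) = [exists i : 'I_(2 ^ d), (i <= j)%N && (0 < x i 0)].
  move=> j; rewrite (mul01 (B := fun j k => Rb d j.+1 k.+1)); last 2 first.
  - by move=> i' k'; rewrite mxE.
  - move=> k; exact: iinf_ge0.
  apply/existsP/existsP.
  - case=> k /andP[hR]; rewrite iinf_pos ht => /existsP[i /andP[hT hp]].
    exists i; rewrite hp andbT -(Cl j i); apply/existsP; exists k; by rewrite hR hT.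
  - case=> i /andP[hij hp]; rewrite -(Cl j i) in hij.
    case/existsP: hij => k /andP[hR hT]; exists k; rewrite hR iinf_pos ht.
    by apply/existsP; exists i; rewrite hT hp.
set w := iinf u.
have hw : forall j, w j 0 = ([exists i : 'I_(2 ^ d), (i <= j)%N && (0 < x i 0)])%:R.
  by move=> j; rewrite mxE hu.
rewrite /first_pos.
case: (boolP (has (fun i : 'I_(2 ^ d) => 0 < x i 0) (enum 'I_(2 ^ d)))) => hh; last first.
  have hk := hh; rewrite has_find size_enum_ord in hk; rewrite (negbTE hk) /=.
  have -> : w = 0.
    apply/matrixP => j c; rewrite ord1 hw mxE; apply/eqP; rewrite pnatr_eq0 eqb0.
    apply/existsP => [[i /andP[_ hp]]]; move/hasP: hh; apply; exists i => //.
    by rewrite mem_enum.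
  by rewrite !mulmx0.
have hk := hh; rewrite has_find size_enum_ord in hk.
set k := find _ _ in hk *.
rewrite hk /= subn1 /=.
set io : 'I_(2 ^ d) := Ordinal hk.
have hpos : 0 < x io 0.
  have := nth_find io hh; rewrite -/k.
  by rewrite (_ : nth io _ k = io) //; apply: val_inj; rewrite /= nth_enum_ord.
have hbef : forall i : 'I_(2 ^ d), (i < k)%N -> ~~ (0 < x i 0).
  move=> i hi; have := before_find io hi.
  have e : nth io (enum 'I_(2 ^ d)) i = i.
    by apply: val_inj; rewrite /= nth_enum_ord.
  by rewrite e => ->.
have hex : forall j : 'I_(2 ^ d), [exists i : 'I_(2 ^ d), (i <= j)%N && (0 < x i 0)] = (io <= j)%N.
  move=> j; apply/existsP/idP => [[i /andP[hij hp]]|hij]; last by exists io; rewrite hij hpos.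
  rewrite leqNgt; apply/negP => hjk.
  have : (i < k)%N by apply: leq_ltn_trans hij hjk.
  by move/hbef; rewrite hp.
have hPw : forall l : 'I_(2 ^ d), (Pmx R d *m w) l 0 = (l == io)%:R.
  move=> l; rewrite mxE.
  transitivity (\sum_(j < 2 ^ d) (j == l)%:R * (io <= j)%N%:R
     - \sum_(j < 2 ^ d) ((0 < l)%N && (j.+1 == l))%:R * (io <= j)%N%:R :> R).
    rewrite -sumrB; apply: eq_bigr => j _; rewrite -mulrBl hw hex mxE /Pentry eqSS.
    congr (_ * _); rewrite ltnS subn1 /= -[(j:nat) == l]/(j == l).
    case E1: (j == l); case E2: ((0 < l)%N && (j.+1 == l)); rewrite /= ?subr0 ?sub0r //.
    by move/eqP: E1 => E1; subst j; case/andP: E2 => _ /eqP; lia.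
  rewrite sum_delta.
  case: (posnP l) => [l0|lpos].
    rewrite big1 => [|j _]; last by rewrite l0 /= mul0r.
    rewrite subr0 -val_eqE /= l0; by rewrite leqn0 eq_sym.
  have hl' : (l.-1 < 2 ^ d)%N by apply: leq_ltn_trans (leq_pred l) (ltn_ord l).
  rewrite (eq_bigr (fun j => (j == Ordinal hl')%:R * (io <= j)%N%:R)); last first.
    move=> j _; rewrite ?lpos /=; congr (_%:R * _); rewrite -val_eqE /=.
    by apply/eqP/eqP; lia.
  rewrite sum_delta /= -val_eqE /=.
  case H1: (io <= l)%N; case H2: (io <= l.-1)%N; case H3: ((l:nat) == io);
    rewrite /= ?subrr ?subr0 ?sub0r //; exfalso; lia.
apply/matrixP => h c; rewrite ord1 !mxE.
rewrite (eq_bigr (fun l => (l == io)%:R * Smx R d h l)); last first.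
  by move=> l _; rewrite hPw mulrC.
rewrite sum_delta mxE /Sb /= !subn1 /=.
done.
Qed.
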